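(* Let $\mathbb{M}^3$ be Minkowski 3-space with inner product $\langle x,y\rangle_{\mathbb{L}}=-x_1y_1+x_2y_2+x_3y_3$. Let $\sigma=\sigma(u,v)$ be a smooth surface in $\mathbb{M}^3$ and let $\{t,n,b\}$ be smooth pairwise orthogonal vector fields along $\sigma$ with $\langle t,t\rangle_{\mathbb{L}}=-1$, $\langle n,n\rangle_{\mathbb{L}}=1$, $\langle b,b\rangle_{\mathbb{L}}=1$, such that $\sigma_u=t$, $\sigma_v=\lambda b$ for a nowhere-vanishing function $\lambda$, and $$t_u=\kappa n,\qquad n_u=\kappa t-\tau b,\qquad b_u=\tau n$$ for functions $\kappa,\tau$ (so each $u$-curve is a unit-speed timelike geodesic of $\sigma$ with curvature $\kappa$ and torsion $\tau$). Assume there are constants $A,B$ with $B^2>A^2$ and $A\kappa+B\tau=1$, and that $\tau$ vanishes nowhere. Define $$\sigma^*(u,v)=\sigma(u,v)-A\,n(u,v),\qquad t^*=\frac{Bt+Ab}{\sqrt{B^2-A^2}},\qquad b^*=\frac{-At+Bb}{\sqrt{B^2-A^2}},$$ and along each $u$-curve let $u^*$ be a parameter with $du^*/du=\sqrt{B^2-A^2}\,\tau$. Then: (1) $\sigma^*_u=\tau(Bt+Ab)$, so $t^*=\partial\sigma^*/\partial u^*$ is a unit timelike vector, and $n$ is orthogonal to both $\sigma^*_u$ and $\sigma^*_v$; (2) $\|\sigma-\sigma^*\|=\sqrt{|\langle \sigma-\sigma^*,\sigma-\sigma^*\rangle_{\mathbb{L}}|}$ is constant, $\langle\sigma^*-\sigma,b\rangle_{\mathbb{L}}=0$,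 $\langle\sigma^*-\sigma,b^*\rangle_{\mathbb{L}}=0$, and $\langle b,b^*\rangle_{\mathbb{L}}$ is constant; (3) $\partial t^*/\partial u^*=\kappa^* n$ and $\partial b^*/\partial u^*=\tau^* n$, where $$\kappa^*=\frac{B\kappa+A\tau}{(B^2-A^2)\tau},\qquad \tau^*=\frac{B\tau-A\kappa}{(B^2-A^2)\tau}.$$
   Context: A vector $x\in\mathbb{M}^3$ is spacelike if $\langle x,x\rangle_{\mathbb{L}}>0$ or $x=0$, timelike if $\langle x,x\rangle_{\mathbb{L}}<0$. A surface spanned by a one-parameter family of geodesic Bertrand curves with constants $A,B$ ($A\kappa+B\tau=1$) is called a Razzaboni surface; the map $\sigma\mapsto\sigma^*$ satisfying properties (2) is called a Razzaboni transformation and $\sigma^*$ the dual Razzaboni surface. *)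

(* Defs.v *)
From Stdlib Require Import Reals List.
From Coquelicot Require Import Coquelicot.
Open Scope R_scope.

Definition V3 : Type := (R * R * R)%type.
Definition c1 (x : V3) : R := fst (fst x).
Definition c2 (x : V3) : R := snd (fst x).
Definition c3 (x : V3) : R := snd x.
Definition mkV (a b c : R) : V3 := (a, b, c).

Definition vadd (x y : V3) : V3 := mkV (c1 x + c1 y) (c2 x + c2 y) (c3 x + c3 y).
Definition vscal (k : R) (x : V3) : V3 := mkV (k * c1 x) (k * c2 x) (k * c3 x).
Definition vsub (x y : V3) : V3 := vadd x (vscal (-1) y).

Definition lor (x y : V3) : R := - c1 x * c1 y + c2 x * c2 y + c3 x * c3 y.
Definition lnorm (x : V3) : R := sqrt (Rabs (lor x x)).

Definition pu (f : R -> R -> R) (u v : R) : R := Derive (fun x => f x v) u.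
Definition pv (f : R -> R -> R) (u v : R) : R := Derive (fun y => f u y) v.

Definition puV (F : R -> R -> V3) (u v : R) : V3 :=
  mkV (pu (fun a b => c1 (F a b)) u v) (pu (fun a b => c2 (F a b)) u v)
      (pu (fun a b => c3 (F a b)) u v).
Definition pvV (F : R -> R -> V3) (u v : R) : V3 :=
  mkV (pv (fun a b => c1 (F a b)) u v) (pv (fun a b => c2 (F a b)) u v)
      (pv (fun a b => c3 (F a b)) u v).

(* Iterated partial derivative: true = d/du, false = d/dv
   (applied from the end of the list to the front). *)
Fixpoint pd (w : list bool) (f : R -> R -> R) : R -> R -> R :=
  match w with
  | nil => f
  | true :: w' => pu (pd w' f)
  | false :: w' => pv (pd w' f)
  end.

Definition open2 (D : R -> R -> Prop) : Prop :=
  forall u v, D u v -> exists eps : R, 0 < eps /\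
    forall x y, Rabs (x - u) < eps -> Rabs (y - v) < eps -> D x y.

Definition smooth_on (D : R -> R -> Prop) (f : R -> R -> R) : Prop :=
  forall (w : list bool) u v, D u v ->
    ex_derive (fun x => pd w f x v) u /\ ex_derive (fun y => pd w f u y) v.

Definition smoothV_on (D : R -> R -> Prop) (F : R -> R -> V3) : Prop :=
  smooth_on D (fun a b => c1 (F a b)) /\ smooth_on D (fun a b => c2 (F a b)) /\
  smooth_on D (fun a b => c3 (F a b)).

(* Main.v *)
Require Import Defs.
From Stdlib Require Import Reals.
From Coquelicot Require Import Coquelicot.
Open Scope R_scope.


From Stdlib Require Import FunctionalExtensionality Lra.
Local Notation c1 := Defs.c1.
Local Notation c2 := Defs.c2.
Local Notation c3 := Defs.c3.

Lemma vec_eq (x y : V3) : c1 x = c1 y -> c2 x = c2 y -> c3 x = c3 y -> x = y.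
Proof. destruct x as [[x1 x2] x3], y as [[y1 y2] y3]; unfold c1,c2,c3; simpl; intros; subst; reflexivity. Qed.

Lemma lor_addl x y z : lor (vadd x y) z = lor x z + lor y z.
Proof. unfold lor, vadd, mkV, c1, c2, c3; simpl; ring. Qed.
Lemma lor_addr x y z : lor z (vadd x y) = lor z x + lor z y.
Proof. unfold lor, vadd, mkV, c1, c2, c3; simpl; ring. Qed.
Lemma lor_scall k x z : lor (vscal k x) z = k * lor x z.
Proof. unfold lor, vscal, mkV, c1, c2, c3; simpl; ring. Qed.
Lemma lor_scalr k x z : lor z (vscal k x) = k * lor z x.
Proof. unfold lor, vscal, mkV, c1, c2, c3; simpl; ring. Qed.
Lemma lor_sym x y : lor x y = lor y x.
Proof. unfold lor; ring. Qed.
Lemma lor_subl x y z : lor (vsub x y) z = lor x z - lor y z.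
Proof. unfold vsub; rewrite lor_addl, lor_scall; ring. Qed.
Lemma lor_subr x y z : lor z (vsub x y) = lor z x - lor z y.
Proof. unfold vsub; rewrite lor_addr, lor_scalr; ring. Qed.

Lemma puV_ext F G u v : (forall x y, F x y = G x y) -> puV F u v = puV G u v.
Proof. intros H; replace F with G; [reflexivity|]. apply functional_extensionality; intro x; apply functional_extensionality; intro y; now rewrite H. Qed.
Lemma pvV_ext F G u v : (forall x y, F x y = G x y) -> pvV F u v = pvV G u v.
Proof. intros H; replace F with G; [reflexivity|]. apply functional_extensionality; intro x; apply functional_extensionality; intro y; now rewrite H. Qed.

Lemma ex_u D F u v : smoothV_on D F -> D u v ->
  ex_derive (fun x => c1 (F x v)) u /\ ex_derive (fun x => c2 (F x v)) u /\ ex_derive (fun x => c3 (F x v)) u.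
Proof. intros [H1 [H2 H3]] Hd. repeat split; [apply (H1 nil u v Hd)|apply (H2 nil u v Hd)|apply (H3 nil u v Hd)]. Qed.
Lemma ex_v D F u v : smoothV_on D F -> D u v ->
  ex_derive (fun y => c1 (F u y)) v /\ ex_derive (fun y => c2 (F u y)) v /\ ex_derive (fun y => c3 (F u y)) v.
Proof. intros [H1 [H2 H3]] Hd. repeat split; [apply (H1 nil u v Hd)|apply (H2 nil u v Hd)|apply (H3 nil u v Hd)]. Qed.

Lemma puV_lin D a c F G u v : smoothV_on D F -> smoothV_on D G -> D u v ->
  puV (fun x y => vadd (vscal a (F x y)) (vscal c (G x y))) u v =
  vadd (vscal a (puV F u v)) (vscal c (puV G u v)).
Proof.
  intros HF HG Hd. destruct (ex_u D F u v HF Hd) as [f1 [f2 f3]].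
  destruct (ex_u D G u v HG Hd) as [g1 [g2 g3]].
  unfold puV, pu, vadd, vscal, mkV, c1, c2, c3 in *; simpl in *.
  f_equal; [f_equal|];
  (rewrite Derive_plus; [rewrite !Derive_scal; reflexivity| |]; apply ex_derive_scal; assumption).
Qed.
Lemma pvV_lin D a c F G u v : smoothV_on D F -> smoothV_on D G -> D u v ->
  pvV (fun x y => vadd (vscal a (F x y)) (vscal c (G x y))) u v =
  vadd (vscal a (pvV F u v)) (vscal c (pvV G u v)).
Proof.
  intros HF HG Hd. destruct (ex_v D F u v HF Hd) as [f1 [f2 f3]].
  destruct (ex_v D G u v HG Hd) as [g1 [g2 g3]].
  unfold pvV, pv, vadd, vscal, mkV, c1, c2, c3 in *; simpl in *.
  f_equal; [f_equal|];
  (rewrite Derive_plus; [rewrite !Derive_scal; reflexivity| |]; apply ex_derive_scal; assumption).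
Qed.

Lemma orth_v D F c u v : open2 D -> smoothV_on D F -> (forall u v, D u v -> lor (F u v) (F u v) = c) ->
  D u v -> lor (F u v) (pvV F u v) = 0.
Proof.
  intros HD HF Hc Hd.
  destruct (ex_v D F u v HF Hd) as [e1 [e2 e3]].
  set (g := fun y => lor (F u y) (F u y)).
  assert (G1 : is_derive g v (2 * lor (F u v) (pvV F u v))).
  { apply Derive_correct in e1; apply Derive_correct in e2; apply Derive_correct in e3.
    pose proof (is_derive_plus _ _ _ _ _ (is_derive_plus _ _ _ _ _ (is_derive_opp _ _ _ (is_derive_mult _ _ _ _ _ e1 e1 (fun _ _ => Rmult_comm _ _))) (is_derive_mult _ _ _ _ _ e2 e2 (fun _ _ => Rmult_comm _ _))) (is_derive_mult _ _ _ _ _ e3 e3 (fun _ _ => Rmult_comm _ _))) as K.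
    match type of K with is_derive _ _ ?l => replace (2 * lor (F u v) (pvV F u v)) with l end.
    - eapply is_derive_ext; [|exact K]. intro y; unfold g, lor, plus, opp, mult; simpl; ring.
    - unfold lor, pvV, pv, mkV, plus, opp, mult; simpl; unfold Defs.c1, Defs.c2, Defs.c3; simpl; ring.
  }
  assert (G2 : is_derive g v 0).
  { destruct (HD u v Hd) as [eps [Heps Hb]].
    apply (is_derive_ext_loc (fun _ => c)).
    - exists (mkposreal eps Heps); intros y Hy. unfold g; symmetry; apply Hc, Hb.
      + rewrite Rminus_eq_0, Rabs_R0; exact Heps.
      + exact Hy.
    - auto_derive; auto. }
  pose proof (is_derive_unique _ _ _ G1) as U1.
  pose proof (is_derive_unique _ _ _ G2) as U2. lra.
Qed.

Theorem mainTheorem2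
  (D : R -> R -> Prop) (HD : open2 D)
  (sigma t n b : R -> R -> V3) (lambda kappa tau : R -> R -> R) (A B : R)
  (ustar : R -> R -> R)
  (Hsm_sigma : smoothV_on D sigma) (Hsm_t : smoothV_on D t)
  (Hsm_n : smoothV_on D n) (Hsm_b : smoothV_on D b)
  (Htt : forall u v, D u v -> lor (t u v) (t u v) = -1)
  (Hnn : forall u v, D u v -> lor (n u v) (n u v) = 1)
  (Hbb : forall u v, D u v -> lor (b u v) (b u v) = 1)
  (Htn : forall u v, D u v -> lor (t u v) (n u v) = 0)
  (Htb : forall u v, D u v -> lor (t u v) (b u v) = 0)
  (Hnb : forall u v, D u v -> lor (n u v) (b u v) = 0)
  (Hsu : forall u v, D u v -> puV sigma u v = t u v)
  (Hsv : forall u v, D u v -> pvV sigma u v = vscal (lambda u v) (b u v))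
  (Hlam : forall u v, D u v -> lambda u v <> 0)
  (Htu : forall u v, D u v -> puV t u v = vscal (kappa u v) (n u v))
  (Hnu : forall u v, D u v ->
     puV n u v = vsub (vscal (kappa u v) (t u v)) (vscal (tau u v) (b u v)))
  (Hbu : forall u v, D u v -> puV b u v = vscal (tau u v) (n u v))
  (HAB : B ^ 2 > A ^ 2)
  (Hrel : forall u v, D u v -> A * kappa u v + B * tau u v = 1)
  (Htau : forall u v, D u v -> tau u v <> 0)
  (Hus : forall u v, D u v ->
     is_derive (fun x => ustar x v) u (sqrt (B ^ 2 - A ^ 2) * tau u v)) :
  let sstar := fun u v => vsub (sigma u v) (vscal A (n u v)) in
  let tstar := fun u v =>
    vscal (/ sqrt (B ^ 2 - A ^ 2)) (vadd (vscal B (t u v)) (vscal A (b u v))) in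
  let bstar := fun u v =>
    vscal (/ sqrt (B ^ 2 - A ^ 2)) (vadd (vscal (- A) (t u v)) (vscal B (b u v))) in
  let kstar := fun u v => (B * kappa u v + A * tau u v) / ((B ^ 2 - A ^ 2) * tau u v) in
  let tstar' := fun u v => (B * tau u v - A * kappa u v) / ((B ^ 2 - A ^ 2) * tau u v) in
  (* (1) *)
  (forall u v, D u v ->
     puV sstar u v = vscal (tau u v) (vadd (vscal B (t u v)) (vscal A (b u v))) /\
     vscal (/ pu ustar u v) (puV sstar u v) = tstar u v /\
     lor (tstar u v) (tstar u v) = -1 /\
     lor (n u v) (puV sstar u v) = 0 /\
     lor (n u v) (pvV sstar u v) = 0) /\
  (* (2) *)
  (exists c : R, forall u v, D u v -> lnorm (vsub (sigma u v) (sstar u v)) = c) /\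
  (forall u v, D u v -> lor (vsub (sstar u v) (sigma u v)) (b u v) = 0) /\
  (forall u v, D u v -> lor (vsub (sstar u v) (sigma u v)) (bstar u v) = 0) /\
  (exists c : R, forall u v, D u v -> lor (b u v) (bstar u v) = c) /\
  (* (3) *)
  (forall u v, D u v ->
     vscal (/ pu ustar u v) (puV tstar u v) = vscal (kstar u v) (n u v) /\
     vscal (/ pu ustar u v) (puV bstar u v) = vscal (tstar' u v) (n u v)).
Proof.
  intros sstar tstar bstar kstar tstar'.
  set (s := sqrt (B ^ 2 - A ^ 2)).
  assert (Hs2 : s * s = B ^ 2 - A ^ 2) by (apply sqrt_sqrt; lra).
  assert (Hs : s <> 0) by (intro E; rewrite E in Hs2; lra).
  assert (Hpus : forall u v, D u v -> pu ustar u v = s * tau u v).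
  { intros u v Hd; unfold pu; apply is_derive_unique; apply Hus; auto. }
  assert (Hsu' : forall u v, D u v -> puV sstar u v = vscal (tau u v) (vadd (vscal B (t u v)) (vscal A (b u v)))).
  { intros u v Hd. rewrite (puV_ext _ (fun x y => vadd (vscal 1 (sigma x y)) (vscal (-A) (n x y)))).
    2:{ intros; apply vec_eq; unfold sstar, vsub, vadd, vscal, mkV, c1, c2, c3; simpl; ring. }
    rewrite (puV_lin D) by auto. rewrite Hsu, Hnu by auto.
    pose proof (Hrel u v Hd) as R.
    apply vec_eq; unfold sstar, vsub, vadd, vscal, mkV, c1, c2, c3; simpl.
    all: match goal with |- ?l = ?r => apply Rminus_diag_uniq;
      first [ replace (l - r) with ((1 - (A * kappa u v + B * tau u v)) * c1 (t u v)) by (unfold c1; ring)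
            | replace (l - r) with ((1 - (A * kappa u v + B * tau u v)) * c2 (t u v)) by (unfold c2; ring)
            | replace (l - r) with ((1 - (A * kappa u v + B * tau u v)) * c3 (t u v)) by (unfold c3; ring) ];
      rewrite R; ring end. }
  assert (Hpvs : forall u v, D u v -> pvV sstar u v = vadd (vscal 1 (pvV sigma u v)) (vscal (-A) (pvV n u v))).
  { intros u v Hd. rewrite (pvV_ext _ (fun x y => vadd (vscal 1 (sigma x y)) (vscal (-A) (n x y)))).
    2:{ intros; apply vec_eq; unfold sstar, vsub, vadd, vscal, mkV, c1, c2, c3; simpl; ring. }
    apply (pvV_lin D); auto. }
  assert (Hdiff : forall u v, sstar u v = vsub (sigma u v) (vscal A (n u v))) by reflexivity.
  assert (Hsd : forall u v, vsub (sstar u v) (sigma u v) = vscal (-A) (n u v)).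
  { intros; apply vec_eq; unfold sstar, vsub, vadd, vscal, mkV, c1, c2, c3; simpl; ring. }
  assert (Hsd' : forall u v, vsub (sigma u v) (sstar u v) = vscal A (n u v)).
  { intros; apply vec_eq; unfold sstar, vsub, vadd, vscal, mkV, c1, c2, c3; simpl; ring. }
  assert (Htst : forall u v, tstar u v = vadd (vscal (/ s * B) (t u v)) (vscal (/ s * A) (b u v))).
  { intros; apply vec_eq; unfold tstar, vsub, vadd, vscal, mkV, c1, c2, c3; fold s; simpl; ring. }
  assert (Hbst : forall u v, bstar u v = vadd (vscal (/ s * - A) (t u v)) (vscal (/ s * B) (b u v))).
  { intros; apply vec_eq; unfold bstar, vsub, vadd, vscal, mkV, c1, c2, c3; fold s; simpl; ring. }
  split; [|split; [|split; [|split; [|split]]]].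
  - intros u v Hd. pose proof (Htau u v Hd) as Ht0. split; [auto|].
    split; [|split; [|split]].
    + rewrite Hsu' by auto. rewrite Hpus by auto. rewrite Htst.
      apply vec_eq; unfold vsub, vadd, vscal, mkV, c1, c2, c3; simpl; field; auto.
    + rewrite Htst. rewrite !lor_addl, !lor_addr, !lor_scall, !lor_scalr.
      rewrite (lor_sym (b u v) (t u v)), Htt, Hbb, Htb by auto.
      transitivity ((A*A - B*B) / (s*s)); [field; auto|]. replace (A*A - B*B) with (-(s*s)) by (rewrite Hs2; ring). field; auto.
    + rewrite Hsu' by auto. rewrite !lor_scalr, !lor_addr, !lor_scalr.
      rewrite (lor_sym (n u v) (t u v)), Htn, Hnb by auto. ring.
    + rewrite Hpvs by auto. rewrite Hsv by auto. rewrite !lor_addr, !lor_scalr.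
      rewrite (orth_v D n 1) by auto. rewrite Hnb by auto. ring.
  - exists (sqrt (Rabs (A * A))). intros u v Hd. unfold lnorm. rewrite Hsd'.
    rewrite lor_scall, lor_scalr, Hnn by auto. f_equal; f_equal; ring.
  - intros u v Hd. rewrite Hsd, lor_scall, Hnb by auto. ring.
  - intros u v Hd. rewrite Hsd, Hbst, lor_scall, !lor_addr, !lor_scalr.
    rewrite (lor_sym (n u v) (t u v)), Htn, Hnb by auto. ring.
  - exists (/ s * B). intros u v Hd. rewrite Hbst, !lor_addr, !lor_scalr.
    rewrite (lor_sym (b u v) (t u v)), Htb, Hbb by auto. ring.
  - intros u v Hd. pose proof (Htau u v Hd) as Ht0. rewrite Hpus by auto. split.
    + rewrite (puV_ext _ _ u v Htst), (puV_lin D) by auto. rewrite Htu, Hbu by auto.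
      unfold kstar. rewrite <- Hs2.
      apply vec_eq; unfold vsub, vadd, vscal, mkV, c1, c2, c3; simpl; field; auto.
    + rewrite (puV_ext _ _ u v Hbst), (puV_lin D) by auto. rewrite Htu, Hbu by auto.
      unfold tstar'. rewrite <- Hs2.
      apply vec_eq; unfold vsub, vadd, vscal, mkV, c1, c2, c3; simpl; field; auto.
Qed.
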